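(* Let $N\ge1$ and let $\{a_n\}_{n=0}^{N-1},\{b_n\}_{n=0}^{N-1},\{c_n\}_{n=1}^{N}$ be real sequences with $c_n>0$, $a_{N-1}=0$, $b_{N-1}=\tfrac12$, $c_N=1$, satisfying for $n=1,\dots,N-1$ $$a_{n-1}=a_n\Big(\frac{1}{c_n^2+1}\Big)^{1/2}+b_n\Big(\frac{1}{c_n^2+1}\Big)^{3/2}c_n^2,\quad b_{n-1}=b_n\Big(\frac{1}{c_n^2+1}\Big)^{3/2}+\frac{c_n}{c_n^2+1},\quad -3b_nc_n+(c_n^2+1)^{1/2}(1-c_n^2)=0.$$ Then for each $n\in\{2,\dots,N\}$, $c_{n-1}$ is the unique root in $(0,1)$ of the equation in $x$ $$\frac{1}{x}(x^2+1)^{1/2}(1-x^2)=\frac{1}{c_n^2+1}\Big(\frac{1}{c_n}+2c_n\Big),$$ $c_N>c_{N-1}>\cdots>c_2>c_1$, and $b_n=\dfrac{(c_n^2+1)^{1/2}}{3c_n}(1-c_n^2)$ for $n=1,\dots,N-1$.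
   Context: These sequences describe the equilibrium of the risk-seeking insider model (Model 3) of an $N$-period Kyle-type insider trading model, in which the insider's trading intensity in period $n$ is $c_n\sigma_u\Delta t_N^{1/2}\Sigma_{n-1}^{-1/2}$; the claim concerns only the sequences as defined here. *)

(* Defs.v *)
From Stdlib Require Import Reals.
Open Scope R_scope.

Definition half_pow (c : R) : R := sqrt (1 / (c ^ 2 + 1)).
Definition three_half_pow (c : R) : R := (sqrt (1 / (c ^ 2 + 1))) ^ 3.

Definition root_lhs (x : R) : R := (1 / x) * sqrt (x ^ 2 + 1) * (1 - x ^ 2).
Definition root_rhs (c : R) : R := (1 / (c ^ 2 + 1)) * (1 / c + 2 * c).

(* Main.v *)
Require Import Defs.
From Stdlib Require Import Reals Lra Lia Psatz.
Open Scope R_scope.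

Lemma sq_facts (x : R) : sqrt (x^2+1) * sqrt (x^2+1) = x^2+1 /\ 0 < sqrt (x^2+1).
Proof.
  split.
  - apply sqrt_sqrt. nra.
  - apply sqrt_lt_R0. nra.
Qed.

Lemma lhs_dec (x y : R) : 0 < x -> x < y -> y < 1 -> root_lhs y < root_lhs x.
Proof.
  intros Hx Hxy Hy1. unfold root_lhs.
  destruct (sq_facts x) as [Hsx Psx]. destruct (sq_facts y) as [Hsy Psy].
  set (sx := sqrt (x^2+1)) in *. set (sy := sqrt (y^2+1)) in *.
  assert (Hcmp : sy * x < sx * y).
  { destruct (Rlt_or_le (sy*x) (sx*y)) as [H|H]; [exact H|].
    exfalso.
    assert (Q0 : 0 <= sx*y) by (apply Rmult_le_pos; lra).
    assert (Q1 : (sx*y)*(sx*y) <= (sy*x)*(sy*x)) by (apply Rmult_le_compat; lra).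
    assert (Q2 : sx*sx*(y*y) <= sy*sy*(x*x)).
    { eapply Rle_trans; [|eapply Rle_trans; [exact Q1|]]; right; ring. }
    rewrite Hsx, Hsy in Q2. nra. }
  set (u := 1/y*sy). set (v := 1/x*sx).
  assert (Hu : u * y = sy) by (unfold u; field; lra).
  assert (Hv : v * x = sx) by (unfold v; field; lra).
  assert (Huv : u < v).
  { destruct (Rlt_or_le u v) as [H|H]; [exact H|]. exfalso.
      assert (Pxy : 0 < x*y) by nra.
      assert (v*(x*y) <= u*(x*y)) by (apply Rmult_le_compat_r; lra).
      assert (sy*x = u*(x*y)) by (rewrite <- Hu; ring).
      assert (sx*y = v*(x*y)) by (rewrite <- Hv; ring). lra. }
  assert (Pv : 0 < v) by (unfold v; apply Rmult_lt_0_compat; [apply Rdiv_lt_0_compat|]; lra).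
  assert (0 < 1 - y^2) by nra.
  assert (1 - y^2 < 1 - x^2) by nra.
  assert (u*(1-y^2) < v*(1-y^2)) by (apply Rmult_lt_compat_r; lra).
  assert (v*(1-y^2) < v*(1-x^2)) by (apply Rmult_lt_compat_l; lra).
  lra.
Qed.

Lemma lhs_lt_rhs (c : R) : 0 < c -> root_lhs c < root_rhs c.
Proof.
  intros Hc. unfold root_lhs, root_rhs.
  destruct (sq_facts c) as [Hs Ps]. set (s := sqrt (c^2+1)) in *.
  assert (s <= c^2+1) by nra.
  assert (A : 1/c*s*(1-c^2)*c < 1).
  { replace (1/c*s*(1-c^2)*c) with (s*(1-c^2)) by (field; lra). nra. }
  assert (B : 1 < 1/(c^2+1)*(1/c+2*c)*c).
  { replace (1/(c^2+1)*(1/c+2*c)*c) with ((1+2*c^2)/(c^2+1)) by (field; nra).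
    apply (Rmult_lt_reg_r (c^2+1)); [nra|]. unfold Rdiv.
    rewrite Rmult_assoc, Rinv_l by nra. nra. }
  apply (Rmult_lt_reg_r c); lra.
Qed.

Theorem proposition5 (N : nat) (a b c : nat -> R) :
  (1 <= N)%nat ->
  (forall n : nat, (1 <= n <= N)%nat -> 0 < c n) ->
  a (N - 1)%nat = 0 ->
  b (N - 1)%nat = 1 / 2 ->
  c N = 1 ->
  (forall n : nat, (1 <= n <= N - 1)%nat ->
     a (n - 1)%nat = a n * half_pow (c n) + b n * three_half_pow (c n) * (c n) ^ 2 /\
     b (n - 1)%nat = b n * three_half_pow (c n) + c n / ((c n) ^ 2 + 1) /\
     - 3 * b n * c n + sqrt ((c n) ^ 2 + 1) * (1 - (c n) ^ 2) = 0) ->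
  (forall n : nat, (2 <= n <= N)%nat ->
     (0 < c (n - 1)%nat < 1 /\
      root_lhs (c (n - 1)%nat) = root_rhs (c n) /\
      (forall x : R, 0 < x < 1 -> root_lhs x = root_rhs (c n) -> x = c (n - 1)%nat))) /\
  (forall n : nat, (2 <= n <= N)%nat -> c (n - 1)%nat < c n) /\
  (forall n : nat, (1 <= n <= N - 1)%nat ->
     b n = sqrt ((c n) ^ 2 + 1) / (3 * c n) * (1 - (c n) ^ 2)).
Proof.
  intros HN Hc Ha Hb HcN Hrec.
  assert (Hbn : forall n, (1 <= n <= N - 1)%nat ->
     b n = sqrt ((c n) ^ 2 + 1) / (3 * c n) * (1 - (c n) ^ 2)).
  { intros n Hn. destruct (Hrec n Hn) as [_ [_ H3]].
    assert (0 < c n) by (apply Hc; lia).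
    assert (E : b n * (3 * c n) = sqrt ((c n) ^ 2 + 1) * (1 - (c n) ^ 2)) by lra.
    replace (sqrt ((c n) ^ 2 + 1) / (3 * c n) * (1 - (c n) ^ 2))
      with (sqrt ((c n) ^ 2 + 1) * (1 - (c n) ^ 2) / (3 * c n)) by (field; lra).
    rewrite <- E. field; lra. }
  assert (Hkey : forall n, (2 <= n <= N)%nat -> root_lhs (c (n-1)%nat) = root_rhs (c n)).
  { intros n Hn.
    assert (Hm : (1 <= n - 1 <= N - 1)%nat) by lia.
    assert (Pm : 0 < c (n-1)%nat) by (apply Hc; lia).
    assert (L : root_lhs (c (n-1)%nat) = 3 * b (n-1)%nat).
    { unfold root_lhs. rewrite (Hbn _ Hm). field. lra. }
    rewrite L.
    destruct (Nat.eq_dec n N) as [->|Hne].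
    - rewrite Hb, HcN. unfold root_rhs. field.
    - assert (Hn' : (1 <= n <= N - 1)%nat) by lia.
      destruct (Hrec n Hn') as [_ [H2 _]]. rewrite H2, (Hbn _ Hn').
      assert (Pn : 0 < c n) by (apply Hc; lia).
      unfold three_half_pow, root_rhs.
      rewrite sqrt_div_alt by nra. rewrite sqrt_1.
      destruct (sq_facts (c n)) as [Hs Ps].
      set (s := sqrt (c n ^ 2 + 1)) in *.
      rewrite <- Hs. field. lra. }
  assert (P1 : forall n : nat, (2 <= n <= N)%nat ->
     (0 < c (n - 1)%nat < 1 /\
      root_lhs (c (n - 1)%nat) = root_rhs (c n) /\
      (forall x : R, 0 < x < 1 -> root_lhs x = root_rhs (c n) -> x = c (n - 1)%nat))).
  { intros n Hn.
    assert (Pm : 0 < c (n-1)%nat) by (apply Hc; lia).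
    assert (Pn : 0 < c n) by (apply Hc; lia).
    assert (K := Hkey n Hn).
    assert (Hlt1 : c (n-1)%nat < 1).
    { assert (0 < root_rhs (c n)).
      { unfold root_rhs. apply Rmult_lt_0_compat.
        - apply Rdiv_lt_0_compat; nra.
        - assert (0 < 1 / c n) by (apply Rdiv_lt_0_compat; lra). lra. }
      rewrite <- K in H. unfold root_lhs in H.
      destruct (sq_facts (c (n-1)%nat)) as [_ Ps].
      assert (0 < 1 / c (n-1)%nat * sqrt (c (n - 1)%nat ^ 2 + 1)).
      { apply Rmult_lt_0_compat; [apply Rdiv_lt_0_compat|]; lra. }
      destruct (Rlt_or_le (c (n-1)%nat) 1) as [H1|H1]; [exact H1|]. exfalso.
      assert (1 - c (n-1)%nat ^ 2 <= 0) by nra. nra. }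
    split; [lra|]. split; [exact K|].
    intros x Hx Hxe. rewrite <- K in Hxe.
    destruct (Rtotal_order x (c (n-1)%nat)) as [H|[H|H]]; [|exact H|].
    - pose proof (lhs_dec x (c (n-1)%nat) ltac:(lra) H Hlt1). lra.
    - pose proof (lhs_dec (c (n-1)%nat) x Pm H ltac:(lra)). lra. }
  split; [exact P1|]. split; [|exact Hbn].
  intros n Hn.
  destruct (P1 n Hn) as [[Pm Hm1] [K _]].
  assert (Pn : 0 < c n) by (apply Hc; lia).
  destruct (Rlt_or_le (c n) 1) as [H1|H1]; [|lra].
  destruct (Rlt_or_le (c (n-1)%nat) (c n)) as [H|H]; [exact H|]. exfalso.
  pose proof (lhs_lt_rhs (c n) Pn).
  destruct (Rle_lt_or_eq_dec _ _ H) as [H'|H'].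
  - pose proof (lhs_dec (c n) (c (n-1)%nat) Pn H' Hm1). lra.
  - rewrite <- H' in K. lra.
Qed.
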